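(* Let $r\geq1$, let $\mathbf a=(a_1,\ldots,a_r)$ be positive integers, let $D$ be a positive common multiple of $a_1,\ldots,a_r$, and let $j\geq 1$ be an integer dividing $a_i$ for some $1\leq i\leq r$; put $\rho_j=e^{2\pi i/j}$. Then for all $n\ge 0$, $$ W_{j}(n,\mathbf a) = \frac{\rho_j^{-n}}{D(r-1)!} \sum_{m=1}^r \sum_{\ell=1}^{j} \rho_j^{\ell} \sum_{k=m-1}^{r-1} s(r,k)\, (-1)^{k-m+1} \binom{k}{m-1} \sum_{\substack{0\leq j_1\leq \frac{D}{a_1}-1,\ldots, 0\leq j_r\leq \frac{D}{a_r}-1 \\ a_1j_1+\cdots+a_rj_r \equiv \ell \pmod j}} D^{-k} (a_1j_1+\cdots+a_rj_r)^{k-m+1}\, n^{m-1}.$$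
   Context: $p_{\mathbf a}(n)$ is the number of integer solutions $(x_1,\ldots,x_r)$ of $a_1x_1+\cdots+a_rx_r=n$ with all $x_i\geq 0$. There are unique polynomials $P_\lambda$, indexed by the $D$-th roots of unity $\lambda$, with $p_{\mathbf a}(n)=\sum_{\lambda^D=1}P_\lambda(n)\lambda^{-n}$ for all $n\geq 0$; the Sylvester wave is $W_j(n,\mathbf a)=P_{\rho_j}(n)\rho_j^{-n}$. Here $s(r,k)$ denotes the coefficient of $x^k$ in $(x+1)(x+2)\cdots(x+r-1)$ (i.e. the unsigned Stirling number of the first kind $\left[{r\atop k+1}\right]$), the inner sum is over integer tuples, and $0^0=1$. *)

(* Defs.v *)
From HB Require Import structures.
From mathcomp Require Import all_boot all_order all_algebra.
From mathcomp Require Import complex.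
From mathcomp Require Import reals trigo.
Set Implicit Arguments. Unset Strict Implicit. Unset Printing Implicit Defensive.
Import Order.TTheory GRing.Theory Num.Theory.
Local Open Scope ring_scope.

(* p_a(n): number of (x_1..x_r) in N^r with a_1 x_1 + ... + a_r x_r = n.
   Since every a_i >= 1, each x_i <= n, so we count tuples with x_i in [0,n]. *)
Definition p_count (r : nat) (a : 'I_r -> nat) (n : nat) : nat :=
  #|[set x : {ffun 'I_r -> 'I_n.+1} | (\sum_(i < r) a i * x i)%N == n]|.

Definition stir (r k : nat) : int :=
  (\prod_(1 <= t < r) ('X + (t%:R)%:P : {poly int})) `_ k.

Definition rho (R : realType) (j : nat) : R[i] :=
  (cos (2 * pi / j%:R) +i* sin (2 * pi / j%:R))%C.

(* Main.v *)
Require Import Defs.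
From HB Require Import structures.
From mathcomp Require Import all_boot all_order all_algebra.
From mathcomp Require Import complex.
From mathcomp Require Import reals trigo.
From mathcomp Require Import ring lra.
Import Order.TTheory GRing.Theory Num.Theory.
Local Open Scope ring_scope.
Section Rho.
Variable R : realType.
Local Open Scope complex_scope.
Definition cis (x : R) : R[i] := (cos x +i* sin x).

Lemma cisD x y : cis x * cis y = cis (x + y).
Proof. rewrite /cis cosD sinD; simpc. congr (_ +i* _); rewrite /=; ring. Qed.

Lemma cisX x k : cis x ^+ k = cis (k%:R * x).
Proof.
elim: k => [|k IH]; first by rewrite expr0 mul0r /cis cos0 sin0.
by rewrite exprS IH cisD mulrSr mulrDl mul1r addrC.
Qed.

Lemma cis2pi : cis (pi *+ 2) = 1.
Proof. by rewrite /cis cos2pi sin2pi. Qed.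

Lemma rhoE D : rho R D = cis (2 * pi / D%:R).
Proof. by []. Qed.

Lemma cis_neq1 x : 0 < x < pi *+ 2 -> cis x != 1.
Proof.
move=> /andP[x0 x2]; apply/negP => /eqP [] c1 _.
have h : cos (x / 2) ^+ 2 = 1.
  have hx : (x / 2) *+ 2 = x by rewrite -mulr_natr mulfVK ?pnatr_eq0.
  have := cos_mulr2n (x / 2). rewrite hx c1 => e.
  have : cos (x / 2) ^+ 2 *+ 2 = 1 *+ 2 by rewrite -(subrK 1 (cos (x / 2) ^+ 2 *+ 2)) -e mulr2n.
  by move/eqP; rewrite eqrMn2r /= => /eqP.
have s0 : sin (x / 2) ^+ 2 = 0 by rewrite sin2cos2 h subrr.
have : 0 < sin (x / 2).
  apply: sin_gt0_pi; apply/andP; split; first by rewrite divr_gt0.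
  by rewrite ltr_pdivrMr // mulr_natr.
by move: s0 => /eqP; rewrite expf_eq0 /= => /eqP ->; rewrite ltxx.
Qed.

Lemma rho_prim D : (0 < D)%N -> D.-primitive_root (rho R D).
Proof.
move=> D0; apply/andP; split => //; apply/forallP => i; rewrite unity_rootE.
rewrite rhoE cisX.
have Dn0 : (D%:R : R) != 0 by rewrite pnatr_eq0 -lt0n.
case: (ltngtP i.+1 D) => [lt||eq].
- rewrite eqbF_neg; apply: cis_neq1.
  have pi0 : 0 < pi *+ 2 :> R by rewrite mulrn_wgt0 // pi_gt0.
  rewrite (_ : i.+1%:R * (2*pi/D%:R) = pi *+ 2 * (i.+1%:R / D%:R)); last first.
    by rewrite -mulr_natr; field.
  rewrite mulr_gt0 ?divr_gt0 ?ltr0n //=.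
  by rewrite -[X in _ < X]mulr1 ltr_pM2l // ltr_pdivrMr ?ltr0n // mul1r ltr_nat.
- by rewrite ltnNge ltn_ord.
- rewrite eq (_ : D%:R * (2*pi/D%:R) = pi *+ 2) ?cis2pi ?eqxx //. by rewrite -mulr_natr; field.
Qed.
End Rho.
Section Uniq.
Variable F : numFieldType.

Lemma size_drop_top (p : {poly F}) n :
  (size p <= n.+1)%N -> p`_n = 0 -> (size p <= n)%N.
Proof.
move=> hs hc; apply/leq_sizeP => k; rewrite leq_eqVlt => /orP[/eqP <- //|lt].
by apply: nth_default; apply: leq_trans hs _.
Qed.

Lemma poly_nat_roots (p : {poly F}) : (forall n : nat, p.[n%:R] = 0) -> p = 0.
Proof.
move=> h; apply/eqP; apply/negPn/negP => p0.
have := @max_poly_roots _ p [seq i%:R | i <- iota 0 (size p)] p0.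
rewrite size_map size_iota ltnn => Hr; suff: false by []; apply: Hr.
  by apply/allP => x /mapP[i _ ->]; apply/rootP.
rewrite map_inj_uniq ?iota_uniq //; exact: (mulrIn (oner_neq0 F)).
Qed.

Definition shiftQ (mu1 mu : F) (q : {poly F}) : {poly F} :=
  mu *: (q \Po ('X + 1)) - mu1 *: q.

Lemma size_XaddC1 : size ('X + 1 : {poly F}) = 2.
Proof. by rewrite size_XaddC. Qed.

Lemma shiftQ_size mu1 mu q : (size (shiftQ mu1 mu q) <= size q)%N.
Proof.
rewrite /shiftQ; apply: leq_trans (size_polyD _ _) _.
by rewrite geq_max size_polyN !(leq_trans (size_scale_leq _ _)) // size_comp_poly2 // size_XaddC1.
Qed.

Lemma shiftQ_coef_top mu1 mu q :
  (shiftQ mu1 mu q)`_(size q).-1 = (mu - mu1) * lead_coef q.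
Proof.
rewrite /shiftQ coefB !coefZ.
have -> : (q \Po ('X + 1))`_(size q).-1 = lead_coef q.
  by rewrite -(size_comp_poly2 q size_XaddC1) -/(lead_coef _) lead_coef_comp ?size_XaddC1 // lead_coefXaddC expr1n mulr1.
by rewrite mulrBl.
Qed.

Lemma shiftQ_same mu q : q != 0 -> (size (shiftQ mu mu q) < size q)%N.
Proof.
move=> q0; have sq : (0 < size q)%N by rewrite size_poly_gt0.
rewrite -(prednK sq) ltnS; apply: size_drop_top; first by rewrite prednK // shiftQ_size.
by rewrite shiftQ_coef_top subrr mul0r.
Qed.

Lemma shiftQ_neq0 mu1 mu q : mu != mu1 -> q != 0 -> shiftQ mu1 mu q != 0.
Proof.
move=> ne q0; apply/eqP => e; have := shiftQ_coef_top mu1 mu q.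
rewrite e coef0 => /esym/eqP; rewrite mulf_eq0 subr_eq0 (negbTE ne) /=.
by rewrite lead_coef_eq0 (negbTE q0).
Qed.

Lemma shiftQ_eval mu1 mu q (n : nat) :
  (shiftQ mu1 mu q).[n%:R] * mu ^+ n = q.[n.+1%:R] * mu ^+ n.+1 - mu1 * (q.[n%:R] * mu ^+ n).
Proof.
rewrite /shiftQ hornerD hornerN !hornerZ horner_comp hornerD hornerX hornerC -natr1 exprS.
by rewrite mulrBl; congr (_ - _); rewrite ?mulrA // (mulrC mu).
Qed.

Lemma exp_poly_uniq (D : nat) (mu : 'I_D -> F) (Q : 'I_D -> {poly F}) :
  injective mu -> (forall k, mu k != 0) ->
  (forall n : nat, \sum_k (Q k).[n%:R] * mu k ^+ n = 0) -> forall k, Q k = 0.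
Proof.
move=> mu_inj mu0 H k0; apply/eqP/negPn/negP => Qk0.
move: {2}(\sum_(k | k != k0) size (Q k))%N (leqnn (\sum_(k | k != k0) size (Q k))%N) => N.
elim: N Q H Qk0 => [|N IH] Q H Qk0 hN.
- have Qz : forall k, k != k0 -> Q k = 0.
    move=> k kk0; apply/eqP; rewrite -size_poly_eq0 -leqn0.
    apply: leq_trans hN; by rewrite (bigD1 k) //= leq_addr.
  have : Q k0 = 0; last by move/eqP: Qk0.
  apply: poly_nat_roots => n; have := H n; rewrite (bigD1 k0) //= big1 => [|k kk0].
    by rewrite addr0 => /eqP; rewrite mulf_eq0 expf_eq0 (negbTE (mu0 k0)) andbF orbF => /eqP.
  by rewrite Qz // horner0 mul0r.
- case: (boolP [exists k, (k != k0) && (Q k != 0)]) => [/existsP[k1 /andP[k10 Qk1]]|].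
  + pose Q' k := shiftQ (mu k1) (mu k) (Q k).
    apply: (IH Q').
    * move=> n; under eq_bigr => k _ do rewrite /Q' shiftQ_eval.
      by rewrite sumrB -mulr_sumr !H mulr0 subrr.
    * by apply: shiftQ_neq0 => //; rewrite (inj_eq mu_inj) eq_sym.
    * rewrite -ltnS; apply: leq_trans hN.
      rewrite (bigD1 k1) //= [X in (_ < X)%N](bigD1 k1) //= -addSn.
      apply: leq_add; first by apply: shiftQ_same.
      by apply: leq_sum => k _; apply: shiftQ_size.
  + rewrite negb_exists => /forallP Hk.
    have : Q k0 = 0; last by move/eqP: Qk0.
    apply: poly_nat_roots => n; have := H n; rewrite (bigD1 k0) //= big1 => [|k kk0].
      by rewrite addr0 => /eqP; rewrite mulf_eq0 expf_eq0 (negbTE (mu0 k0)) andbF orbF => /eqP.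
    by move: (Hk k); rewrite kk0 /= negbK => /eqP ->; rewrite horner0 mul0r.
Qed.
End Uniq.
Section Count.
Variable T : comNzRingType.
Local Notation P := {poly T}.

Lemma pcount_coef r (a : 'I_r -> nat) n :
  (p_count a n)%:R = (\prod_(i < r) \sum_(x < n.+1) 'X^(a i * x) : P)`_n.
Proof.
rewrite bigA_distr_bigA /= coef_sum /p_count -sum1_card natr_sum big_mkcond /=.
apply: eq_bigr => f _; rewrite prodrXr coefXn inE eq_sym.
by case: (_ == _).
Qed.

Definition agree n (p q : P) := forall i, (i <= n)%N -> p`_i = q`_i.

Lemma agreeM n p p' q q' : agree n p p' -> agree n q q' -> agree n (p * q) (p' * q').
Proof.
move=> hp hq i hi; rewrite !coefM; apply: eq_bigr => j _.
have h1 : (j <= n)%N by apply: leq_trans hi; rewrite -ltnS.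
have h2 : (i - j <= n)%N by apply: leq_trans hi; rewrite leq_subr.
by rewrite hp ?hq.
Qed.

Lemma agree_prod n r (F G : 'I_r -> P) : (forall i, agree n (F i) (G i)) ->
  agree n (\prod_i F i) (\prod_i G i).
Proof.
move=> h; apply: (big_ind2 (agree n)) => //; last by move=> *; apply: agreeM.
Qed.

Lemma sum_split_poly (a b K : nat) :
  \sum_(x < b * K) 'X^(a * x) = (\sum_(t < b) 'X^(a * t)) * \sum_(q < K) 'X^(a * b * q) :> P.
Proof.
elim: K => [|K IH]; first by rewrite muln0 !big_ord0 mulr0.
rewrite big_ord_recr /= mulrDr -IH mulnS addnC.
rewrite big_split_ord /=; congr (_ + _); rewrite mulr_suml; apply: eq_bigr => t _.
by rewrite -exprD mulnDr mulnA addnC.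
Qed.

Lemma agree_trunc (a M n : nat) : (0 < a)%N -> (n < M)%N ->
  agree n (\sum_(x < n.+1) 'X^(a * x)) (\sum_(x < M) 'X^(a * x)).
Proof.
move=> a0 nM i hi.
rewrite -(subnKC nM) [in RHS]big_split_ord /= coefD.
rewrite [X in _ = _ + X]coef_sum [X in _ = _ + X]big1 ?addr0 // => x _.
rewrite coefXn; case: eqP => // e.
by move: hi; rewrite e leqNgt (leq_trans (leq_addr x n.+1)) // leq_pmull.
Qed.

Lemma hockey r' m : (\sum_(j < m.+1) 'C(j + r', r') = 'C(m + r'.+1, r'.+1))%N.
Proof.
elim: m => [|m IH]; first by rewrite big_ord1 add0n !binn.
by rewrite big_ord_recr /= IH [in RHS]addnS binS -addSnnS addnC.
Qed.

Lemma S1_coef0 K m : (m < K)%N -> (\sum_(q < K) 'X^q : P)`_m = 1.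
Proof.
move=> mK; rewrite coef_sum (bigD1 (Ordinal mK)) //= coefXn eqxx big1 ?addr0 // => q qm.
by rewrite coefXn; case: eqP => // e; case/eqP: qm; apply: val_inj.
Qed.

Lemma S1_coef K r' m : (m < K)%N ->
  ((\sum_(q < K) 'X^q : P) ^+ r'.+1)`_m = 'C(m + r', r')%:R.
Proof.
elim: r' m => [|r' IH] m mK; first by rewrite expr1 S1_coef0 // bin0.
rewrite exprSr coefM -hockey natr_sum; apply: eq_bigr => j _.
have jK : (j < K)%N by apply: leq_ltn_trans mK; rewrite -ltnS.
by rewrite IH // S1_coef0 ?mulr1 // (leq_ltn_trans (leq_subr _ _) mK).
Qed.

Lemma SD_comp K D : \sum_(q < K) 'X^(D * q) = (\sum_(q < K) 'X^q) \Po 'X^D :> P.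
Proof.
rewrite linear_sum; apply: eq_bigr => q _ /=. by rewrite comp_Xn_poly exprM.
Qed.

Lemma SD_coef K D r' m : (0 < D)%N -> (m < D * K)%N ->
  ((\sum_(q < K) 'X^(D * q) : P) ^+ r'.+1)`_m =
   if (D %| m)%N then 'C(m %/ D + r', r')%:R else 0.
Proof.
move=> D0 mK; rewrite SD_comp -rmorphXn coef_comp_poly_Xn //.
case: ifP => // dm; rewrite S1_coef // ltn_divLR // mulnC //.
Qed.

Lemma count_formula r' (a : 'I_r'.+1 -> nat) D n :
  (forall i, 0 < a i)%N -> (0 < D)%N -> (forall i, a i %| D)%N ->
  (p_count a n)%:R = \sum_(jj : {ffun 'I_r'.+1 -> 'I_D} | [forall i, (jj i < D %/ a i)%N])
   (if (\sum_i a i * jj i <= n)%N && (D %| n - \sum_i a i * jj i)%N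
    then 'C((n - \sum_i a i * jj i) %/ D + r', r')%:R else 0) :> T.
Proof.
move=> a0 D0 aD.
have b0 i : (0 < D %/ a i)%N by rewrite divn_gt0 // dvdn_leq.
rewrite pcount_coef.
rewrite (@agree_prod n _ _ (fun i => \sum_(x < D %/ a i * n.+1) 'X^(a i * x))) //; last first.
  by move=> i; apply: agree_trunc => //; rewrite leq_pmull.
under eq_bigr => i _ do rewrite sum_split_poly (mulnC (a i)) divnK //.
rewrite big_split /= prodr_const card_ord.
under eq_bigr => i _ do rewrite (big_ord_widen D (fun t => 'X^(a i * t)) (leq_div D (a i))).
rewrite (bigA_distr_big_dep _ (fun i (t : 'I_D) => 'X^(a i * t))) /= mulr_suml coef_sum.
apply: eq_big => [f|f _].
  by apply/familyP/forallP => h i; apply: (h i).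
rewrite prodrXr coefXnM ltnNge.
case: leqP => //= hA; rewrite SD_coef //.
by apply: leq_ltn_trans (leq_subr _ _) _; rewrite leq_pmull.
Qed.
End Count.
Section RingSide.
Variable F : numFieldType.

Lemma stir_size r' : (size ((\prod_(1 <= t < r'.+1) ('X + (t%:R)%:P))%R : {poly int}) <= r'.+1)%N.
Proof.
elim: r' => [|r' IH]; first by rewrite big_geq // size_poly1.
rewrite big_nat_recr //=; apply: leq_trans (size_polyMleq _ _) _.
by rewrite size_XaddC addn2 /=.
Qed.

Lemma stir_eval r' (y : F) :
  \sum_(k < r'.+1) (stir r'.+1 k)%:~R * y ^+ k = \prod_(1 <= t < r'.+1) (y + t%:R).
Proof.
set p := \prod_(1 <= t < r'.+1) ('X + (t%:R)%:P) : {poly int}.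
have hs : (size (map_poly (intr : int -> F) p) <= r'.+1)%N.
  by rewrite size_map_inj_poly ?stir_size // ?mulr0z //; exact: intr_inj.
rewrite /stir -/p.
have -> : \prod_(1 <= t < r'.+1) (y + t%:R) = (map_poly (intr : int -> F) p).[y].
  rewrite /p rmorph_prod horner_prod; apply: eq_bigr => t _.
  by rewrite rmorphD /= map_polyX map_polyC /= hornerD hornerX hornerC rmorph_nat.
by rewrite (horner_coef_wide _ hs); apply: eq_bigr => k _; rewrite coef_map.
Qed.

Lemma bin_reindex r (s : nat -> F) (A x d : F) :
  \sum_(1 <= m < r.+1) \sum_(m.-1 <= k < r)
     (s k * (-1) ^+ (k - m.-1) * ('C(k, m.-1))%:R * (d ^- k * A ^+ (k - m.-1) * x ^+ m.-1))
  = \sum_(k < r) s k * ((x - A) / d) ^+ k.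
Proof.
rewrite big_add1 /= -(big_mkord (fun _ => true) (fun k => s k * ((x - A) / d) ^+ k)).
under eq_bigr => i _ do rewrite (big_nat_widenl _ 0) // big_mkcond.
rewrite exchange_big_nat /=; apply: eq_big_nat => k /andP[_ kr].
rewrite expr_div_n addrC exprDn mulr_suml mulr_sumr.
rewrite -(big_mkord (fun _ => true) (fun i => s k * ((- A) ^+ (k - i) * x ^+ i *+ 'C(k, i) / d ^+ k))).
rewrite [in RHS](big_nat_widen _ _ r) // [in RHS]big_mkcond; apply: eq_big_nat => i /andP[_ ir] /=.
rewrite ltnS; case: leqP => // _.
rewrite (exprNn A) -(mulr_natr (_ * x ^+ i)); move: ((-1) ^+ (k - i)) (A ^+ (k - i)) (x ^+ i) ('C(k, i)%:R : F) (d ^- k) (s k) => a1 a2 a3 a4 a5 a6; ring.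
Qed.

Lemma prod_ffact N r' : (\prod_(1 <= t < r'.+1) (N + t) = (N + r') ^_ r')%N.
Proof.
elim: r' => [|r' IH]; first by rewrite big_geq // ffactn0.
by rewrite big_nat_recr //= IH addnS ffactSS mulnC.
Qed.

Lemma prod_pos N r' :
  \prod_(1 <= t < r'.+1) (N%:R + t%:R : F) = ('C(N + r', r') * r'`!)%:R.
Proof. by rewrite bin_ffact -prod_ffact natr_prod; apply: eq_bigr => t _; rewrite natrD. Qed.

Lemma prod_neg N r' : (0 < N <= r')%N ->
  \prod_(1 <= t < r'.+1) (- N%:R + t%:R : F) = 0.
Proof.
move=> /andP[N0 Nr]; apply/eqP; rewrite prodf_seq_eq0; apply/hasP; exists N.
  by rewrite mem_index_iota N0 ltnS.
by rewrite addNr eqxx.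
Qed.

Lemma mod_shift A n D : (0 < D)%N ->
  (D %| A + n * (D - 1))%N = (A == n %[mod D]).
Proof.
move=> D0; have e : (A + n * (D - 1) + n = n * D + A)%N.
  by rewrite -addnA -{2}(muln1 n) -mulnDr subnK // addnC.
rewrite /dvdn (_ : (_ %% D == 0)%N = (A + n * (D - 1) + n == 0 + n %[mod D])); last by rewrite eqn_modDr mod0n.
rewrite e add0n modnMDl.
by [].
Qed.

Lemma orth (z : F) D A n : D.-primitive_root z ->
  \sum_(t < D) (z ^+ t) ^+ A * (z ^+ t) ^- n = if (A == n %[mod D]) then D%:R else 0.
Proof.
move=> pz; have D0 : (0 < D)%N by case/andP: pz.
have zD := prim_expr_order pz.
have e t : (z ^+ t) ^+ A * (z ^+ t) ^- n = (z ^+ (A + n * (D - 1))) ^+ t.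
  have h : (z ^+ t) ^+ n * (z ^+ t) ^+ (n * (D - 1)) = 1.
    have ee : (n + n * (D - 1) = n * D)%N by rewrite -{1}(muln1 n) -mulnDr subnKC.
    by rewrite -exprD ee -exprM mulnA mulnC exprM zD expr1n.
  have x0 : (z ^+ t) ^+ n != 0.
    by apply: contra_eq_neq h => ->; rewrite mul0r eq_sym oner_neq0.
  have -> : (z ^+ t) ^- n = (z ^+ t) ^+ (n * (D - 1)).
    by rewrite -[RHS]mul1r -(mulVf x0) -mulrA h mulr1.
  by rewrite -exprD exprAC.
under eq_bigr => t _ do rewrite e.
rewrite -mod_shift // (prim_order_dvd pz).
set w := z ^+ _; case: eqP => [->|/eqP w1].
  by rewrite (eq_bigr (fun _ => 1)) ?sumr_const ?card_ord // => t _; rewrite expr1n.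
have : (w - 1) * \sum_(t < D) w ^+ t = 0 by rewrite -subrX1 /w exprAC zD expr1n subrr.
by move/eqP; rewrite mulf_eq0 subr_eq0 (negbTE w1) /= => /eqP.
Qed.
End RingSide.
Definition Aj r (a : 'I_r -> nat) D (jj : {ffun 'I_r -> 'I_D}) : nat := (\sum_(i < r) a i * jj i)%N.
Definition boxj r (a : 'I_r -> nat) D (jj : {ffun 'I_r -> 'I_D}) : bool := [forall i, (jj i < D %/ a i)%N].
Lemma sel (F : numFieldType) (w : F) (j A : nat) : (0 < j)%N -> w ^+ j = 1 ->
  \sum_(1 <= l < j.+1) (if (A == l %[mod j]) then w ^+ l else 0) = w ^+ A.
Proof.
move=> j0 wj; set f := fun l => if (A == l %[mod j]) then w ^+ l else 0.
have fj : f j = f 0%N by rewrite /f modnn mod0n wj expr0.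
have e : \sum_(0 <= l < j.+1) f l = f 0%N + \sum_(1 <= l < j.+1) f l by rewrite big_ltn.
have e2 : \sum_(0 <= l < j.+1) f l = \sum_(0 <= l < j) f l + f j by rewrite big_nat_recr.
have -> : \sum_(1 <= l < j.+1) f l = \sum_(0 <= l < j) f l.
  by apply: (addrI (f 0%N)); rewrite -e e2 fj addrC.
rewrite big_mkord (bigD1 (Ordinal (ltn_pmod A j0))) //= big1 ?addr0.
  by rewrite /f modn_mod eqxx expr_mod.
move=> l /eqP nl; rewrite /f (modn_small (ltn_ord l)); case: eqP => // e3.
by case: nl; apply: val_inj; rewrite /= e3.
Qed.

Lemma rho_pow (R : realType) (D j : nat) : (0 < D)%N -> (0 < j)%N -> (j %| D)%N ->
  rho R j = rho R D ^+ (D %/ j).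
Proof.
move=> D0 j0 jD; rewrite !rhoE cisX; congr (cis _ _).
have j0' : (j%:R : R) != 0 by rewrite pnatr_eq0 -lt0n.
have q0 : ((D %/ j)%:R : R) != 0 by rewrite pnatr_eq0 -lt0n divn_gt0 // dvdn_leq.
have e : D = (D %/ j * j)%N by rewrite divnK.
rewrite {2}e natrM; field; by apply/andP.
Qed.

Arguments Aj {r} a {D} jj.
Arguments boxj {r} a {D} jj.
Section Assemble.
Variable F : numFieldType.
Variables (r' : nat) (a : 'I_r'.+1 -> nat) (D : nat).
Local Notation r := r'.+1.

Definition Ipoly (jj : {ffun 'I_r -> 'I_D}) : {poly F} :=
  \sum_(1 <= m < r.+1) (\sum_(m.-1 <= k < r) ((stir r k)%:~R * (-1) ^+ (k - m.-1) * ('C(k, m.-1))%:R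
      * (D%:R ^- k * (Aj a jj)%:R ^+ (k - m.-1))))%:P * 'X^(m.-1).

Definition cst : F := (D%:R * (r.-1)`!%:R)^-1.

Definition Fp (l : F) : {poly F} :=
  cst *: \sum_(jj | boxj a jj) (l ^+ Aj a jj) *: Ipoly jj.

Lemma Ipoly_eval jj (x : F) :
  (Ipoly jj).[x] = \sum_(k < r) (stir r k)%:~R * ((x - (Aj a jj)%:R) / D%:R) ^+ k.
Proof.
rewrite -(bin_reindex _ _ (fun k => (stir r k)%:~R)) /Ipoly horner_sum; apply: eq_bigr => m _.
rewrite hornerM hornerC hornerXn mulr_suml; apply: eq_bigr => k _.
by rewrite !mulrA.
Qed.

Hypothesis a0 : forall i, (0 < a i)%N.
Hypothesis D0 : (0 < D)%N.
Hypothesis aD : forall i, (a i %| D)%N.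

Lemma Aj_bound (jj : {ffun 'I_r -> 'I_D}) : boxj a jj -> (Aj a jj < r * D)%N.
Proof.
move=> /forallP hb; apply: (@leq_ltn_trans (\sum_(i < r) D.-1)).
  apply: leq_sum => i _; rewrite -ltnS prednK //.
  by rewrite -[X in (_ < X)%N](divnK (aD i)) mulnC ltn_pmul2r // hb.
by rewrite sum_nat_const card_ord ltn_pmul2l // prednK.
Qed.

Lemma term_eq (jj : {ffun 'I_r -> 'I_D}) (n : nat) : boxj a jj ->
  cst * ((if (Aj a jj == n %[mod D]) then D%:R else 0) *
    \prod_(1 <= t < r) ((n%:R - (Aj a jj)%:R) / D%:R + t%:R))
  = if (Aj a jj <= n)%N && (D %| n - Aj a jj)%N
    then 'C((n - Aj a jj) %/ D + r', r')%:R else 0.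
Proof.
move=> hb; set A := Aj a jj.
have Dn0 : (D%:R : F) != 0 by rewrite pnatr_eq0 -lt0n.
have Du : (D%:R : F) \is a GRing.unit by rewrite unitfE.
have fn0 : (r'`!%:R : F) != 0 by rewrite pnatr_eq0 -lt0n fact_gt0.
case: leqP => An /=.
  rewrite eq_sym (eqn_mod_dvd _ An); case: ifP => hd; last by rewrite mul0r mulr0.
  rewrite -natrB // -natr_div // prod_pos /cst /= natrM; field.
  by apply/andP.
case: ifP => hm; last by rewrite mul0r mulr0.
have dv : (D %| A - n)%N by rewrite -eqn_mod_dvd ?(ltnW An) // eq_sym.
rewrite -opprB -natrB ?(ltnW An) // mulNr -natr_div // prod_neg ?mulr0 //.
apply/andP; split.
  by rewrite divn_gt0 // dvdn_leq // subn_gt0.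
rewrite -ltnS ltn_divLR //; apply: leq_ltn_trans (leq_subr _ _) _.
exact: Aj_bound.
Qed.

Lemma rep (z : F) (pz : D.-primitive_root z) (n : nat) :
  (p_count a n)%:R = \sum_(t < D) (Fp (z ^+ t)).[n%:R] * (z ^+ t) ^- n.
Proof.
rewrite (count_formula F r' a D n a0 D0 aD) /Fp.
under [RHS]eq_bigr => t _ do rewrite hornerZ horner_sum -mulrA mulr_suml.
rewrite -mulr_sumr exchange_big mulr_sumr; apply: eq_big => // jj hb.
rewrite -(term_eq jj n hb); congr (cst * _).
rewrite -(orth _ z D (Aj a jj) n pz) mulr_suml; apply: eq_bigr => t _.
rewrite hornerZ Ipoly_eval stir_eval mulrAC.
by [].
Qed.

Lemma fin (w : F) (j : nat) (x : F) : (0 < j)%N -> w ^+ j = 1 ->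
 (Fp w).[x] = cst * \sum_(1 <= m < r.+1) \sum_(1 <= l < j.+1) w ^+ l *
      \sum_(m.-1 <= k < r)
        ((stir r k)%:~R * (-1) ^+ (k - m.-1) * ('C(k, m.-1))%:R *
         \sum_(jj : {ffun 'I_r -> 'I_D} | [forall i, (jj i < D %/ a i)%N] &&
                 ((\sum_(i < r) a i * jj i)%N == l %[mod j]))
           ((D%:R) ^- k * ((\sum_(i < r) a i * jj i)%N)%:R ^+ (k - m.-1) * x ^+ m.-1)).
Proof.
move=> j0 wj; rewrite /Fp hornerZ; congr (cst * _).
rewrite horner_sum.
under eq_bigr => jj _ do rewrite hornerZ /Ipoly horner_sum mulr_sumr.
rewrite exchange_big /=; apply: eq_bigr => m _.
under [RHS]eq_bigr => l _ do rewrite mulr_sumr.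
rewrite [RHS]exchange_big /=.
under eq_bigr => jj _ do rewrite hornerM hornerC hornerXn mulr_suml mulr_sumr.
rewrite exchange_big /=; apply: eq_bigr => k _.
under [RHS]eq_bigr => l _ do rewrite big_mkcondr !mulr_sumr.
rewrite [RHS]exchange_big /=; apply: eq_bigr => jj _.
rewrite -(sel _ w j (Aj a jj) j0 wj) mulr_suml; apply: eq_bigr => l _.
rewrite /Aj; case: ifP => _; last by rewrite !mulr0 mul0r.
by rewrite !mulrA.
Qed.
End Assemble.
Theorem proposition4p2 (R : realType) (r : nat) (a : 'I_r -> nat) (D j : nat)
  (P : R[i] -> {poly R[i]}) :
  (1 <= r)%N ->
  (forall i, (0 < a i)%N) ->
  (0 < D)%N ->
  (forall i, (a i %| D)%N) ->
  (1 <= j)%N ->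
  (exists i, (j %| a i)%N) ->
  (* P is the (unique) family of polynomials indexed by the D-th roots of
     unity lambda = rho D ^+ k, k < D, representing p_a *)
  (forall n : nat,
     (p_count a n)%:R = \sum_(k < D) (P (rho R D ^+ k)).[n%:R] * (rho R D ^+ k) ^- n) ->
  forall n : nat,
    (P (rho R j)).[n%:R] * (rho R j) ^- n =
    (rho R j) ^- n / (D%:R * (r.-1)`!%:R) *
    \sum_(1 <= m < r.+1) \sum_(1 <= l < j.+1) (rho R j) ^+ l *
      \sum_(m.-1 <= k < r)
        ((stir r k)%:~R * (-1) ^+ (k - m.-1) * ('C(k, m.-1))%:R *
         \sum_(jj : {ffun 'I_r -> 'I_D} |
                 [forall i, (jj i < D %/ a i)%N] &&
                 ((\sum_(i < r) a i * jj i)%N == l %[mod j]))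
           ((D%:R) ^- k * ((\sum_(i < r) a i * jj i)%N)%:R ^+ (k - m.-1)
            * (n%:R) ^+ m.-1)).
Proof.
Proof.
move=> r1 a0 D0 aD j1 [i0 ji] hP n.
move: a a0 aD hP i0 ji; case: r r1 => [//|r'] _ a a0 aD hP i0 ji.
set z := rho R D; have pz : D.-primitive_root z by apply: rho_prim.
have jD : (j %| D)%N := dvdn_trans ji (aD i0).
have hQ : forall t : 'I_D, P (z ^+ t) - Fp _ r' a D (z ^+ t) = 0.
  apply: (exp_poly_uniq _ D (fun t => (z ^+ t)^-1)).
  - move=> s t /invr_inj /eqP; rewrite (eq_prim_root_expr pz) !modn_small // => /eqP.
    exact: val_inj.
  - by move=> t; rewrite invr_eq0 expf_eq0 (prim_root_eq0 pz) (gtn_eqF D0) andbF.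
  - move=> m; under eq_bigr => t _ do rewrite hornerD hornerN mulrBl exprVn.
    by rewrite sumrB -hP -(rep _ r' a D a0 D0 aD z pz m) subrr.
have hz : rho R j = z ^+ (Ordinal (ltn_pmod (D %/ j) D0)).
  by rewrite /= (prim_expr_mod pz) (rho_pow R D j D0 j1 jD).
have := hQ (Ordinal (ltn_pmod (D %/ j) D0)); rewrite -hz => /eqP; rewrite subr_eq0 => /eqP ->.
rewrite (fin _ r' a D (rho R j) j n%:R j1 (prim_expr_order (rho_prim R j j1))).
by rewrite /cst mulrC mulrA.
Qed.
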